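(* Let $L$ be a distributive lattice and $\mathbf x,\mathbf y\in L^n$. The following are equivalent: (i) $\mathbf x$ and $\mathbf y$ are g-comonotone; (ii) $\mathbf x$ and $\mathbf y$ are dually g-comonotone; (iii) $\bigwedge_{i\in I}(x_i\vee y_i)=\bigwedge_{i\in I}x_i\vee\bigwedge_{i\in I}y_i$ for each non-empty subset $I\subseteq\{1,\dots,n\}$; (iv) $\bigvee_{i\in I}(x_i\wedge y_i)=\bigvee_{i\in I}x_i\wedge\bigvee_{i\in I}y_i$ for each non-empty subset $I\subseteq\{1,\dots,n\}$.
   Context: $\mathbf x,\mathbf y\in L^n$ are g-comonotone if for every pair $i,j\in\{1,\dots,n\}$: $(x_i\vee y_i)\wedge(x_j\vee y_j)=(x_i\wedge x_j)\vee(y_i\wedge y_j)$. They are dually g-comonotone if for every pair $i,j$: $(x_i\wedge y_i)\vee(x_j\wedge y_j)=(x_i\vee x_j)\wedge(y_i\vee y_j)$. *)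

(* Defs.v *)
From HB Require Import structures.
From mathcomp Require Import all_boot all_order.
Set Implicit Arguments. Unset Strict Implicit. Unset Printing Implicit Defensive.
Import Order.TTheory.
Local Open Scope order_scope.

(* Vectors of L^n are functions 'I_n -> L (indices 0..n-1 instead of 1..n). *)

Definition g_comonotone (d : Order.disp_t) (L : latticeType d) (n : nat)
  (x y : 'I_n -> L) : Prop :=
  forall i j : 'I_n,
    (x i `|` y i) `&` (x j `|` y j) = (x i `&` x j) `|` (y i `&` y j).

Definition dually_g_comonotone (d : Order.disp_t) (L : latticeType d) (n : nat)
  (x y : 'I_n -> L) : Prop :=
  forall i j : 'I_n,
    (x i `&` y i) `|` (x j `&` y j) = (x i `|` x j) `&` (y i `|` y j).

(* Meet / join of f over a NON-EMPTY set I, given a witness i0 \in I.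
   Since meet/join are idempotent, using f i0 as the seed of the fold gives
   exactly the meet/join of {f i | i in I}, independently of i0 \in I. *)
Definition meet_ne (d : Order.disp_t) (L : latticeType d) (n : nat)
  (I : {set 'I_n}) (i0 : 'I_n) (f : 'I_n -> L) : L :=
  \big[Order.meet/f i0]_(i in I) f i.

Definition join_ne (d : Order.disp_t) (L : latticeType d) (n : nat)
  (I : {set 'I_n}) (i0 : 'I_n) (f : 'I_n -> L) : L :=
  \big[Order.join/f i0]_(i in I) f i.

(* Main.v *)
Require Import Defs.
From HB Require Import structures.
From mathcomp Require Import all_boot all_order.
Import Order.TTheory.
Local Open Scope order_scope.

Section Gen.
Context (d : Order.disp_t) (L : distrLatticeType d).
Implicit Types a b c e z : L.

Lemma helper a b c e : a `&` b <= c `|` e -> a `&` b <= (a `&` c) `|` (b `&` e).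
Proof.
move=> H; rewrite -(meet_l H) meetUr; apply: leU2.
  by rewrite lexI leIr andbT; apply: leIxl; apply: leIl.
by rewrite lexI leIr andbT; apply: leIxl; apply: leIr.
Qed.

Lemma big_le (I : eqType) (s : seq I) (P : pred I) (F : I -> L) e l :
  l \in s -> P l -> \big[Order.meet/e]_(i <- s | P i) F i <= F l.
Proof.
elim: s => // a s IH; rewrite inE big_cons => /orP[/eqP <-|ls] Pl.
  by rewrite Pl leIl.
case: (P a); last exact: IH.
by apply: leIxr; apply: IH.
Qed.

Lemma big_le_seed (I : Type) (s : seq I) (P : pred I) (F : I -> L) e :
  \big[Order.meet/e]_(i <- s | P i) F i <= e.
Proof.
elim: s => [|a s IH]; rewrite ?big_nil ?big_cons //.
by case: (P a) => //; apply: leIxr.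
Qed.

Lemma le_big (I : Type) (s : seq I) (P : pred I) (F : I -> L) e z :
  z <= e -> (forall i, P i -> z <= F i) -> z <= \big[Order.meet/e]_(i <- s | P i) F i.
Proof.
move=> ze zF; apply: (big_ind (fun w => z <= w)) => // u v zu zv.
by rewrite lexI zu zv.
Qed.

Lemma join_big (I : eqType) (s : seq I) (P : pred I) (F : I -> L) e z c :
  z <= c `|` e -> (forall i, i \in s -> P i -> z <= c `|` F i) ->
  z <= c `|` \big[Order.meet/e]_(i <- s | P i) F i.
Proof.
elim: s => [|a s IH] ze zF; rewrite ?big_nil ?big_cons //.
have IH' : z <= c `|` \big[Order.meet/e]_(i <- s | P i) F i.
  by apply: IH => // i Hi Pi; apply: zF => //; rewrite inE Hi orbT.
case Pa: (P a) => //.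
by rewrite joinIr lexI IH' andbT; apply: zF; rewrite ?inE ?eqxx.
Qed.

Definition CC {n} (x y : 'I_n -> L) := forall i j, x i `&` y j <= x j `|` y i.

Lemma main n (x y : 'I_n -> L) (C : CC x y) (s : seq 'I_n) (P : pred 'I_n) k :
  \big[Order.meet/(x k `|` y k)]_(i <- s | P i) (x i `|` y i) =
  \big[Order.meet/x k]_(i <- s | P i) x i `|` \big[Order.meet/y k]_(i <- s | P i) y i.
Proof.
elim: s => [|j s IH]; rewrite ?big_nil // !big_cons.
case: (P j) => //; rewrite IH.
set A := \big[_/_]_(i <- s | P i) x i; set B := \big[_/_]_(i <- s | P i) y i.
apply/le_anti/andP; split; last first.
  rewrite leUx !lexI.
  rewrite (lexUl _ (leIl _ _)) (lexUl _ (leIr _ _)) (lexUr _ (leIl _ _)) (lexUr _ (leIr _ _)) //.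
rewrite meetUr !meetUl !leUx leUl leUr /= andbT.
have H1 : x j `&` B <= A `|` y j.
  rewrite joinC; apply: join_big => [|i Hi Pi].
    apply: (@le_trans _ _ (x j `&` y k)).
      by rewrite lexI leIl /=; apply: leIxr; apply: big_le_seed.
    by rewrite joinC; apply: C.
  apply: (@le_trans _ _ (x j `&` y i)).
    by rewrite lexI leIl /=; apply: leIxr; apply: big_le.
  by rewrite joinC; apply: C.
have H2 : A `&` y j <= x j `|` B.
  apply: join_big => [|i Hi Pi].
    apply: (@le_trans _ _ (x k `&` y j)).
      by rewrite lexI leIr andbT; apply: leIxl; apply: big_le_seed.
    by apply: C.
  apply: (@le_trans _ _ (x i `&` y j)).
    by rewrite lexI leIr andbT; apply: leIxl; apply: big_le.
  by apply: C.
apply/andP; split.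
  by rewrite meetC (le_trans (helper _ _ _ _ H2)) // meetC.
by apply: le_trans (helper _ _ _ _ H1) _; rewrite [B `&` _]meetC.
Qed.

Lemma gc_CC n (x y : 'I_n -> L) : g_comonotone x y <-> CC x y.
Proof.
split=> [H i j|C i j].
  apply: (@le_trans _ _ ((x i `|` y i) `&` (x j `|` y j))).
    by rewrite lexI (lexUl _ (leIl _ _)) (lexUr _ (leIr _ _)).
  by rewrite H leUx (lexUl _ (leIr _ _)) (lexUr _ (leIl _ _)).
rewrite meetC [x i `&` _]meetC [y i `&` _]meetC.
by have := @main _ _ _ C [:: j] predT i; rewrite !big_cons !big_nil.
Qed.

Lemma iii_CC n (x y : 'I_n -> L) :
  (forall (I : {set 'I_n}) (i0 : 'I_n), i0 \in I ->
          meet_ne I i0 (fun i => x i `|` y i)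
          = meet_ne I i0 x `|` meet_ne I i0 y) <-> CC x y.
Proof.
split=> [H i j|C I i0 _]; last by rewrite /meet_ne main.
have := H [set i; j] i (set21 _ _); rewrite /meet_ne => E.
apply: (@le_trans _ _ (\big[Order.meet/(x i `|` y i)]_(l in [set i; j]) (x l `|` y l))).
  apply: le_big; first by rewrite (lexUl _ (leIl _ _)).
  by move=> l /set2P[->|->]; rewrite ?(lexUl _ (leIl _ _)) ?(lexUr _ (leIr _ _)).
rewrite E; apply: leU2; last exact: big_le_seed.
by apply: big_le; rewrite ?mem_index_enum ?set22.
Qed.
End Gen.

Lemma CC_dual d (L : distrLatticeType d) n (x y : 'I_n -> L) :
  @CC _ (L^d) n x y <-> @CC _ L n x y.
Proof. by split=> H i j; apply: (H j i). Qed.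

Theorem theorem2 (d : Order.disp_t) (L : distrLatticeType d) (n : nat)
  (x y : 'I_n -> L) :
  [/\ (g_comonotone x y <-> dually_g_comonotone x y),
      (g_comonotone x y <->
        forall (I : {set 'I_n}) (i0 : 'I_n), i0 \in I ->
          meet_ne I i0 (fun i => x i `|` y i)
          = meet_ne I i0 x `|` meet_ne I i0 y)
    & (g_comonotone x y <->
        forall (I : {set 'I_n}) (i0 : 'I_n), i0 \in I ->
          join_ne I i0 (fun i => x i `&` y i)
          = join_ne I i0 x `&` join_ne I i0 y)].
Proof.
have G := @gc_CC _ L n x y.
have Gd := @gc_CC _ (L^d) n x y.
have D := @CC_dual _ L n x y.
have T := @iii_CC _ L n x y.
have Td := @iii_CC _ (L^d) n x y.
split.
- exact: (iff_trans G (iff_trans (iff_sym D) (iff_sym Gd))).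
- exact: (iff_trans G (iff_sym T)).
- exact: (iff_trans G (iff_trans (iff_sym D) (iff_sym Td))).
Qed.
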